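(* Let $r\in\mathbb{Z}_{\ge0}$ and let $\chi$ be a character of $T$ of depth $r$. Then for every integer $n\ge r+1$, every irreducible $\mathcal{K}$-subrepresentation of $V_\chi^{\mathcal{K}_n}$ has depth less than $n$, and $\dim_{\mathbb{C}}V_\chi^{\mathcal{K}_n}=q^{n-1}(q+1)$.
   Context: Let $F$ be a non-archimedean local field with odd residual characteristic, ring of integers $\mathcal{O}_F$, residue field of cardinality $q$. Fix a non-square $\epsilon\in\mathcal{O}_F^\times$, $E=F[\sqrt\epsilon]$ with ring of integers $\mathcal{O}_E$, maximal ideal $\mathfrak{p}_E$; $\overline{x}$ is Galois conjugation. $G=\{g\in\mathrm{GL}_2(E):\overline{g}^{\top}\mathrm{w}g=\mathrm{w}\}$, $\mathrm{w}=\begin{pmatrix}0&1\\1&0\end{pmatrix}$; $\mathcal{K}=G\cap M_2(\mathcal{O}_E)$, $\mathcal{K}_n=\{g\in\mathcal{K}:g\equiv I\bmod\mathfrak{p}_E^n\}$. $B$ upper triangular matrices in $G$, $T=\{t(a)=\mathrm{diag}(a,\overline a^{-1}):a\in E^\times\}$, $U=\{\begin{pmatrix}1&\sqrt\epsilon b\\0&1\end{pmatrix}:b\in F\}$. $T_0=\{t(a):a\in\mathcal{O}_E^\times\}$, $T_n=\{t(a):a\in1+\mathfrak{p}_E^n\}$. A character $\chi$ of $T$ has depth $r$ if $\chi|_{T_r}\ne\mathbbm{1}$, $\chi|_{T_{r+1}}=\mathbbm{1}$; a character trivial on $T_0$ also has depth $0$. $V_\chi$ is the space of locally constant $f:G\to\mathbb{C}$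 with $f(bg)=\chi(b)f(g)$ ($b\in B$; $\chi$ trivial on $U$), $G$ acting by right translation; $V_\chi^{\mathcal{K}_n}$ is its $\mathcal{K}$-stable subspace of $\mathcal{K}_n$-fixed vectors. The depth of an irreducible smooth representation of $\mathcal{K}$ is the least integer $d\ge0$ such that $\mathcal{K}_{d+1}$ acts trivially. *)

(* Defs.v *)
(* Setting of Lemma 4.3: G = U(1,1) over a quadratic
   unramified extension E = F[sqrt eps] of a non-archimedean local field F. *)
From HB Require Import structures.
From mathcomp Require Import all_boot all_order all_algebra complex.
From mathcomp Require Import Rstruct.
Import Order.TTheory GRing.Theory Num.Theory ComplexField.
Local Open Scope ring_scope.

Definition CC : fieldType := (Rdefinitions.R)[i].

(* The data: F, E, the normalized valuation v of F (its value at 0 is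
   irrelevant), the residue cardinality q, the embedding iota : F -> E,
   the non-square eps, s = sqrt eps in E, and the Galois conjugation cj. *)
Record U11data := {
  uF : fieldType;
  uE : fieldType;
  uv : uF -> int;
  uq : nat;
  uiota : {rmorphism uF -> uE};
  ueps : uF;
  us : uE;
  ucj : uE -> uE }.

Section Defs.

Definition inPF (D : U11data) (m : int) (x : uF D) : Prop :=
  x = 0 \/ m <= uv D x.

(* z in p_E^m : valuation of E extending v, normalized (E/F unramified),
   v_E(z) = v_F(z * conj z) / 2. *)
Definition inPE (D : U11data) (m : nat) (z : uE D) : Prop :=
  exists c : uF D, uiota D c = z * ucj D z /\ inPF D (2 * m)%:Z c.

(* Axioms: F non-archimedean local field with residue field of odd
   cardinality q; E = F[s], s^2 = eps, eps a non-square unit of O_F. *)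
Record U11_ax (D : U11data) : Prop := {
  val_mul : forall x y : uF D, x != 0 -> y != 0 ->
      uv D (x * y) = uv D x + uv D y;
  val_add : forall x y : uF D, x != 0 -> y != 0 -> x + y != 0 ->
      Num.min (uv D x) (uv D y) <= uv D (x + y);
  val_unif : exists pi : uF D, pi != 0 /\ uv D pi = 1;
  val_complete : forall u : nat -> uF D,
      (forall k : int, exists N, forall i j, (N <= i)%N -> (N <= j)%N ->
         inPF D k (u i - u j)) ->
      exists L, forall k : int, exists N, forall i, (N <= i)%N ->
         inPF D k (u i - L);
  residue_card : exists reps : seq (uF D), size reps = uq D /\
      (forall x, x \in reps -> inPF D 0 x) /\
      (forall i j, (i < uq D)%N -> (j < uq D)%N ->
         inPF D 1 (nth 0 reps i - nth 0 reps j) -> i = j) /\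
      (forall x, inPF D 0 x -> exists i, (i < uq D)%N /\
         inPF D 1 (x - nth 0 reps i));
  q_odd : odd (uq D);
  eps_unit : ueps D != 0 /\ uv D (ueps D) = 0;
  eps_nonsq : forall x : uF D, x ^+ 2 != ueps D;
  s_sq : us D ^+ 2 = uiota D (ueps D);
  E_span : forall z : uE D, exists a b, z = uiota D a + uiota D b * us D;
  cj_def : forall a b : uF D,
      ucj D (uiota D a + uiota D b * us D) = uiota D a - uiota D b * us D }.

Definition Mat (D : U11data) := 'M[uE D]_2.

Definition wmx (D : U11data) : Mat D :=
  \matrix_(i, j) (if i != j then 1 else 0).

Definition inG (D : U11data) (g : Mat D) : Prop :=
  (map_mx (ucj D) g)^T *m wmx D *m g = wmx D.

Definition inK (D : U11data) (m : nat) (k : Mat D) : Prop :=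
  inG D k /\ forall i j, inPE D m (k i j - (i == j)%:R).

Definition inB (D : U11data) (b : Mat D) : Prop :=
  inG D b /\ b ord_max ord0 = 0.

(* characters of T = { t(a) } ~ E^x : chi a stands for chi(t(a)) *)
Definition is_char (D : U11data) (chi : uE D -> CC) : Prop :=
  (forall x y, x != 0 -> y != 0 -> chi (x * y) = chi x * chi y) /\
  (forall x, x != 0 -> chi x != 0).

(* t(a) in T_m : T_0 = t(O_E^x), T_m = t(1 + p_E^m) for m >= 1 *)
Definition inT (D : U11data) (m : nat) (a : uE D) : Prop :=
  if m == 0%N then inPE D 0 a /\ ~ inPE D 1 a else inPE D m (a - 1).

Definition triv_on (D : U11data) (chi : uE D -> CC) (m : nat) : Prop :=
  forall a, inT D m a -> chi a = 1.

Definition char_depth (D : U11data) (chi : uE D -> CC) (r : nat) : Prop :=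
  (~ triv_on D chi r /\ triv_on D chi r.+1) \/ (r = 0%N /\ triv_on D chi 0).

Definition Fun (D : U11data) := Mat D -> CC.

(* V_chi^{K_n}: functions on G (extended by 0 off G), locally constant,
   f(bg) = chi(b) f(g), and right K_n-invariant. *)
Definition Vfix (D : U11data) (chi : uE D -> CC) (n : nat) (f : Fun D) : Prop :=
  (forall g, ~ inG D g -> f g = 0) /\
  (forall g, inG D g -> exists m, forall k, inK D m k -> f (g *m k) = f g) /\
  (forall b g, inB D b -> inG D g -> f (b *m g) = chi (b ord0 ord0) * f g) /\
  (forall g k, inG D g -> inK D n k -> f (g *m k) = f g).

Definition subspace (D : U11data) (W : Fun D -> Prop) : Prop :=
  W (fun _ => 0) /\ (forall f h, W f -> W h -> W (fun g => f g + h g)) /\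
  (forall (c : CC) f, W f -> W (fun g => c * f g)).

Definition Kstable (D : U11data) (W : Fun D -> Prop) : Prop :=
  forall f k, W f -> inK D 0 k -> W (fun g => f (g *m k)).

Definition subrep (D : U11data) (V W : Fun D -> Prop) : Prop :=
  (forall f, W f -> V f) /\ subspace D W /\ Kstable D W.

Definition irr_subrep (D : U11data) (V W : Fun D -> Prop) : Prop :=
  subrep D V W /\ (exists f, W f /\ f <> (fun _ => 0)) /\
  (forall W', subrep D W W' ->
     (forall f, W' f -> f = (fun _ => 0)) \/ (forall f, W f -> W' f)).

Definition acts_trivially (D : U11data) (W : Fun D -> Prop) (m : nat) : Prop :=
  forall f k g, W f -> inK D m k -> f (g *m k) = f g.

Definition rep_depth (D : U11data) (W : Fun D -> Prop) (d : nat) : Prop :=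
  acts_trivially D W d.+1 /\ forall d', (d' < d)%N -> ~ acts_trivially D W d'.+1.

Definition has_dim (D : U11data) (V : Fun D -> Prop) (N : nat) : Prop :=
  exists b : 'I_N -> Fun D, (forall i, V (b i)) /\
    (forall c : 'I_N -> CC, (forall g, \sum_i c i * b i g = 0) ->
        forall i, c i = 0) /\
    (forall f, V f -> exists c : 'I_N -> CC,
        forall g, f g = \sum_i c i * b i g).

End Defs.

(* Main.v *)
Require Import Defs.
From mathcomp Require Import all_boot all_order all_algebra complex.
From mathcomp Require Import ring lra zify.
From Stdlib Require Import ClassicalEpsilon.
Import Order.TTheory GRing.Theory Num.Theory.
Local Open Scope ring_scope.
Set Implicit Arguments. Unset Strict Implicit. Unset Printing Implicit Defensive.

Lemma even_of_invol (n : nat) (f : nat -> nat) :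
  (forall i, (i < n)%N -> (f i < n)%N /\ f (f i) = i /\ f i <> i) -> ~~ odd n.
Proof.
move=> Hf.
have Hlt : forall i : 'I_n, (f i < n)%N by move=> i; case: (Hf i (ltn_ord i)).
pose g (i : 'I_n) : 'I_n := Ordinal (Hlt i).
have ginj : injective g.
  move=> i j /(congr1 val) /= Hij; apply: val_inj => /=.
  by case: (Hf i (ltn_ord i)) => _ [<- _]; rewrite Hij; case: (Hf j (ltn_ord j)) => _ [-> _].
have E1 : n = (\sum_(i < n) ((i < f i)%N + (f i < i)%N))%N.
  rewrite -[n in LHS]card_ord -sum1_card; apply: eq_bigr => i _.
  case: (Hf i (ltn_ord i)) => _ [_ Hne].
  case: (ltngtP i (f i)) => //= H; by exfalso; apply: Hne.
have E2 : (\sum_(i < n) (f i < i)%N = \sum_(i < n) (i < f i)%N)%N.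
  rewrite (reindex_inj ginj) /=; apply: eq_bigr => i _.
  by case: (Hf i (ltn_ord i)) => _ [-> _].
rewrite E1 big_split /= E2 addnn odd_double //.
Qed.

Section Main.
Variable D : U11data.
Hypothesis HD : U11_ax D.

Local Notation F := (uF D).
Local Notation E := (uE D).
Local Notation v := (uv D).
Local Notation io := (uiota D).
Local Notation s := (us D).
Local Notation cj := (ucj D).
Local Notation eps := (ueps D).
Local Notation q := (uq D).
Local Notation pF := (inPF D).
Local Notation pE := (inPE D).

Lemma vM (x y : F) : x != 0 -> y != 0 -> v (x * y) = v x + v y.
Proof. exact: (val_mul D HD). Qed.

Lemma v1 : v 1 = 0.
Proof. have := vM (oner_neq0 F) (oner_neq0 F); rewrite mulr1 => H; set a := v 1 in H *; lia. Qed.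

Lemma vN1 : v (-1) = 0.
Proof.
have H : (-1 : F) != 0 by rewrite oppr_eq0 oner_neq0.
have := vM H H; rewrite mulrNN mulr1 v1; lia.
Qed.

Lemma vN (x : F) : v (- x) = v x.
Proof.
case: (eqVneq x 0) => [->|xn0]; first by rewrite oppr0.
rewrite -mulN1r vM ?vN1 ?add0r // oppr_eq0 oner_neq0 //.
Qed.

Lemma vV (x : F) : x != 0 -> v x^-1 = - v x.
Proof.
move=> xn0; have := vM xn0 (invr_neq0 xn0); rewrite mulfV // v1; lia.
Qed.

Lemma vX (x : F) n : x != 0 -> v (x ^+ n) = v x *+ n.
Proof.
move=> xn0; elim: n => [|n IH]; first by rewrite expr0 v1.
rewrite exprS vM ?expf_neq0 // IH mulrS //.
Qed.

Lemma vD (x y : F) : x != 0 -> y != 0 -> x + y != 0 -> Num.min (v x) (v y) <= v (x + y).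
Proof. exact: (val_add D HD). Qed.

Lemma vD_strict (x y : F) : x != 0 -> y != 0 -> v x < v y -> x + y != 0 /\ v (x + y) = v x.
Proof.
move=> xn0 yn0 lt.
have sn0 : x + y != 0.
  apply/eqP => H; have Hy : y = - x by apply/eqP; rewrite -addr_eq0 addrC H.
  by move: lt; rewrite Hy vN ltxx.
split=> //.
have h1 := vD xn0 yn0 sn0.
have ny0 : - y != 0 by rewrite oppr_eq0.
have xE : x = (x + y) + - y by rewrite addrK.
have h2 := vD sn0 ny0 (ltac:(by rewrite -xE)).
rewrite -xE vN in h2.
move: h1 h2; rewrite /Num.min; case: ifP; case: ifP; lia.
Qed.

Lemma pF0 k : pF k 0.
Proof. by left. Qed.

Lemma pF_le k l (x : F) : k <= l -> pF l x -> pF k x.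
Proof. move=> kl [->|H]; [left|right] => //; lia. Qed.

Lemma pFN k (x : F) : pF k (- x) <-> pF k x.
Proof.
rewrite /inPF vN; split; case=> H; (try by right); left => //.
  by apply/eqP; rewrite -oppr_eq0 H.
by rewrite H oppr0.
Qed.

Lemma pFD k (x y : F) : pF k x -> pF k y -> pF k (x + y).
Proof.
move=> [->|Hx]; first by rewrite add0r.
move=> [->|Hy]; first by rewrite addr0; right.
case: (eqVneq x 0) => [->|xn0]; first by rewrite add0r; right.
case: (eqVneq y 0) => [->|yn0]; first by rewrite addr0; right.
case: (eqVneq (x + y) 0) => [->|sn0]; first by left.
right; have := vD xn0 yn0 sn0; move: Hx Hy; rewrite /Num.min; case: ifP; lia.
Qed.

Lemma pFB k (x y : F) : pF k x -> pF k y -> pF k (x - y).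
Proof. by move=> Hx Hy; apply: pFD => //; apply/pFN. Qed.

Lemma pFM k l (x y : F) : pF k x -> pF l y -> pF (k + l) (x * y).
Proof.
move=> [->|Hx]; first by rewrite mul0r; left.
move=> [->|Hy]; first by rewrite mulr0; left.
case: (eqVneq x 0) => [->|xn0]; first by rewrite mul0r; left.
case: (eqVneq y 0) => [->|yn0]; first by rewrite mulr0; left.
right; rewrite vM //; lia.
Qed.

Lemma pF_v (x : F) : pF (v x) x.
Proof. by right. Qed.

Lemma pF_ge k (x : F) : x != 0 -> pF k x -> k <= v x.
Proof. by move=> xn0 [H|//]; rewrite H eqxx in xn0. Qed.

Lemma pF1 : pF 0 1.
Proof. by right; rewrite v1. Qed.

Lemma pF1n : ~ pF 1 1.
Proof. by case=> [/eqP|]; rewrite ?oner_eq0 // v1. Qed.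

Lemma pF_div k (x y : F) : pF k x -> y != 0 -> pF (k - v y) (x / y).
Proof.
move=> Hx yn0; have := pFM Hx (pF_v (y^-1)); rewrite vV //.
Qed.

Lemma pF_unit k (x y : F) : pF k x -> y != 0 -> v y = 0 -> pF k (x / y).
Proof. move=> Hx yn0 vy; have := pF_div Hx yn0; rewrite vy subr0 //. Qed.

Lemma not_pF1_2 : ~ pF 1 2.
Proof.
move=> H2.
case: (residue_card D HD) => reps [Hsz [Hint [Huniq Hcov]]].
pose r i := nth 0 reps i.
have rint i : (i < q)%N -> pF 0 (r i).
  by move=> iq; apply: Hint; rewrite mem_nth // Hsz.
pose P i j := (j < q)%N /\ pF 1 (r i + 1 - r j).
pose sg i := epsilon (inhabits 0%N) (P i).
have Hsg i : (i < q)%N -> P i (sg i).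
  move=> iq; apply: epsilon_spec.
  have [j [jq Hj]] := Hcov (r i + 1) (pFD (rint i iq) pF1).
  by exists j.
suff : ~~ odd q by rewrite (q_odd D HD).
apply: (@even_of_invol q sg) => i iq.
have [jq Hj] := Hsg i iq; have [kq Hk] := Hsg _ jq.
split=> //; split.
  apply: esym; apply: Huniq => //.
  have -> : r i - r (sg (sg i)) = (r i + 1 - r (sg i)) + (r (sg i) + 1 - r (sg (sg i))) - 2.
    by rewrite /r; ring.
  by apply: pFB => //; apply: pFD.
move=> Ei; rewrite Ei in Hj; apply: pF1n.
by have <- : r i + 1 - r i = 1 by ring.
Qed.

Lemma two_neq0 : (2 : F) != 0.
Proof. by apply/eqP => H; apply: not_pF1_2; left. Qed.

Lemma v2 : v 2 = 0.
Proof.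
have H1 : (1 : F) + 1 != 0 by rewrite -mulr2n two_neq0.
have := vD (oner_neq0 F) (oner_neq0 F) H1.
rewrite -mulr2n v1 /Num.min ltxx => H.
have : ~ (1 <= v 2) by move=> H'; apply: not_pF1_2; right.
move=> Hn.
have Hn' : v 2 < 1 by rewrite ltNge; apply/negP.
change (is_true (0 <= v 2)) in H.
move: H Hn'; move: (v 2) => a; lia.
Qed.

Lemma pF_eps1 : ~ pF 1 eps.
Proof.
have [eps0 veps] := eps_unit D HD.
by move=> /(pF_ge eps0); rewrite veps.
Qed.

Lemma vge0 (x : F) : pF 0 x -> x != 0 -> 0 <= v x.
Proof. by move=> H xn0; apply: pF_ge. Qed.

Lemma pF_int (k : int) (x : F) : (0 <= k) -> pF k x -> pF 0 x.
Proof. by move=> k0; apply: pF_le. Qed.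

Definition hstep (y : F) := y - (y ^+ 2 - eps) / (2 * y).

Lemma hstep_spec (y : F) (k : nat) : y != 0 -> v y = 0 -> pF k.+1 (y ^+ 2 - eps) ->
  [/\ hstep y != 0, v (hstep y) = 0, pF k.+2 (hstep y ^+ 2 - eps) & pF k.+1 (hstep y - y)].
Proof.
move=> yn0 vy He.
have y2n0 : 2 * y != 0 by rewrite mulf_neq0 // two_neq0.
have vy2 : v (2 * y) = 0 by rewrite vM ?two_neq0 // v2 vy.
set e := y ^+ 2 - eps in He *.
set u := e / (2 * y).
have Hu : pF k.+1 u by apply: pF_unit.
have Hu2 : u * (2 * y) = e by rewrite /u divfK.
have hE : hstep y = y - u by [].
have E1 : hstep y - y = - u by rewrite hE; ring.
have E2 : hstep y ^+ 2 - eps = u ^+ 2 + (e - u * (2 * y)).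
  by rewrite hE /e; ring.
rewrite Hu2 subrr addr0 in E2.
have [hn0 hv] : hstep y != 0 /\ v (hstep y) = v y.
  rewrite hE.
  case: (eqVneq u 0) => [->|un0]; first by rewrite oppr0 addr0.
  apply: vD_strict => //; first by rewrite oppr_eq0.
  rewrite vN vy; have := pF_ge un0 Hu; lia.
split=> //; first by rewrite hv.
  rewrite E2 expr2; apply: (@pF_le _ (k.+1 + k.+1)%:Z); first by lia.
  by rewrite PoszD; apply: pFM.
by rewrite E1; apply/pFN.
Qed.

Lemma hensel (t : F) : pF 0 t -> pF 1 (t ^+ 2 - eps) -> False.
Proof.
move=> t0 t1.
have [eps0 veps] := eps_unit D HD.
have tn0 : t != 0.
  apply/eqP => tz; move: t1; rewrite tz expr2 mul0r sub0r => /pFN.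
  exact: pF_eps1.
have vt : v t = 0.
  have h0 := pF_ge tn0 t0.
  suff : ~ (1 <= v t) by lia.
  move=> h1; apply: pF_eps1.
  have -> : eps = t ^+ 2 - (t ^+ 2 - eps) by ring.
  apply: pFB => //; rewrite expr2; apply: (@pF_le _ (1 + 1)) => //.
  by apply: pFM; right.
pose x k := iter k hstep t.
have Inv : forall k, [/\ x k != 0, v (x k) = 0 & pF k.+1 (x k ^+ 2 - eps)].
  elim=> [|k [h1 h2 h3]]; first by split.
  by have [? ? ? _] := hstep_spec h1 h2 h3; split.
have Step : forall k, pF k.+1 (x k.+1 - x k).
  by move=> k; have [h1 h2 h3] := Inv k; have [_ _ _ ?] := hstep_spec h1 h2 h3.
have Cau : forall i j, pF j.+1 (x (j + i)%N - x j).
  elim=> [|i IH] j; first by rewrite addn0 subrr; left.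
  have -> : x (j + i.+1)%N - x j = (x (j + i).+1 - x (j + i)%N) + (x (j + i)%N - x j).
    by rewrite addnS; ring.
  apply: pFD => //; apply: (pF_le _ (Step _)); lia.
have [L HL] : exists L, forall k : int, exists N, forall i, (N <= i)%N -> pF k (x i - L).
  apply: (val_complete D HD) => k; exists `|k|%N => i j Hi Hj.
  have -> : x i - x j = (x (`|k| + (i - `|k|))%N - x `|k|%N) - (x (`|k| + (j - `|k|))%N - x `|k|%N).
    by rewrite !subnKC //; ring.
  by apply: pFB; apply: (pF_le _ (Cau _ _)); lia.
have Lsq : L ^+ 2 - eps = 0.
  apply/eqP/negP => zn0.
  set z := L ^+ 2 - eps in zn0 *.
  pose K := `|v z|.+1.
  have [N HN] := HL K.
  pose i := maxn N K.
  have Hi := HN i (leq_maxl _ _).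
  have [xi0 vxi Hxi] := Inv i.
  have Hx0 : pF 0 (x i) by right; rewrite vxi.
  have HxL : pF 0 (x i + L).
    have -> : x i + L = (x i + x i) - (x i - L) by ring.
    by apply: pFB; [apply: pFD|apply: (pF_le _ Hi)].
  have Hz : pF K z.
    have -> : z = (x i ^+ 2 - eps) - (x i - L) * (x i + L) by rewrite /z; ring.
    apply: pFB.
      by apply: (pF_le _ Hxi); rewrite lez_nat /i; lia.
    by rewrite -[X in pF X]addr0; apply: pFM.
  have := pF_ge (introN idP zn0) Hz; rewrite /K; lia.
by move: (eps_nonsq D HD L); rewrite -subr_eq0 Lsq eqxx.
Qed.

Definition nm (a b : F) := a ^+ 2 - eps * b ^+ 2.

Lemma vsq (x : F) : x != 0 -> v (x ^+ 2) = v x + v x.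
Proof. by move=> xn0; rewrite vX // mulr2n. Qed.

Lemma pF_eps : pF 0 eps.
Proof. have [_ ve] := eps_unit D HD; by right; rewrite ve. Qed.

Lemma nm_split a b : (a != 0) || (b != 0) -> exists k : int,
  [/\ nm a b != 0, v (nm a b) = k + k, pF k a, pF k b & ~ (pF (k+1) a /\ pF (k+1) b)].
Proof.
have [eps0 veps] := eps_unit D HD.
case: (eqVneq a 0) => [->|an0] /=.
  move=> bn0; exists (v b).
  have E : nm 0 b = - (eps * b ^+ 2) by rewrite /nm; ring.
  have hn0 : eps * b ^+ 2 != 0 by rewrite mulf_neq0 // expf_neq0.
  rewrite E vN vM ?expf_neq0 // vsq // veps add0r; split => //.
  - by rewrite oppr_eq0.
  - by left.
  - by right.
  - by case=> _ /(pF_ge bn0); lia.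
case: (eqVneq b 0) => [->|bn0] _.
  exists (v a).
  have E : nm a 0 = a ^+ 2 by rewrite /nm; ring.
  rewrite E vsq //; split => //.
  - by rewrite expf_neq0.
  - by right.
  - by left.
  - by case=> /(pF_ge an0); lia.
have An0 : a ^+ 2 != 0 by rewrite expf_neq0.
have Bn0 : - (eps * b ^+ 2) != 0 by rewrite oppr_eq0 mulf_neq0 // expf_neq0.
have vA : v (a ^+ 2) = v a + v a by rewrite vsq.
have vB : v (- (eps * b ^+ 2)) = v b + v b by rewrite vN vM ?expf_neq0 // vsq // veps add0r.
case: (ltgtP (v a) (v b)) => Hab.
- exists (v a).
  have [Hn Hv] : a ^+ 2 + - (eps * b ^+ 2) != 0 /\ v (a ^+ 2 + - (eps * b ^+ 2)) = v (a ^+ 2).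
    by apply: vD_strict => //; rewrite vA vB; lia.
  rewrite /nm; split => //.
  - by rewrite Hv vA.
  - by right.
  - by right; lia.
  - by case=> /(pF_ge an0); lia.
- exists (v b).
  have [Hn Hv] : - (eps * b ^+ 2) + a ^+ 2 != 0 /\ v (- (eps * b ^+ 2) + a ^+ 2) = v (- (eps * b ^+ 2)).
    by apply: vD_strict => //; rewrite vA vB; lia.
  rewrite /nm addrC; split => //.
  - by rewrite Hv vB.
  - by right; lia.
  - by right.
  - by case=> _ /(pF_ge bn0); lia.
- exists (v b).
  pose t := a / b.
  have tn0 : t != 0 by rewrite mulf_neq0 // invr_neq0.
  have vt : v t = 0 by rewrite vM ?invr_neq0 // vV // Hab; lia.
  have Et : nm a b = b ^+ 2 * (t ^+ 2 - eps).
    by rewrite /nm /t; field.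
  have un0 : t ^+ 2 - eps != 0 by rewrite subr_eq0 (eps_nonsq D HD).
  have vu : v (t ^+ 2 - eps) = 0.
    have h0 : pF 0 (t ^+ 2 - eps).
      apply: pFB; last exact: pF_eps.
      by rewrite expr2 -[X in pF X]addr0; apply: pFM; right; rewrite vt.
    have := pF_ge un0 h0.
    suff : ~ (1 <= v (t ^+ 2 - eps)) by lia.
    move=> h1; apply: (@hensel t); first by right; rewrite vt.
    by right.
  rewrite Et; split => //.
  - by rewrite mulf_neq0 // expf_neq0.
  - by rewrite vM ?expf_neq0 // vsq // vu addr0.
  - by right; lia.
  - by right.
  - by case=> _ /(pF_ge bn0); lia.
Qed.

Lemma nm_pF (m : int) a b : pF (m + m) (nm a b) <-> pF m a /\ pF m b.
Proof.
case: (boolP ((a != 0) || (b != 0))) => [nz|]; last first.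
  rewrite negb_or !negbK => /andP [/eqP -> /eqP ->].
  have -> : nm 0 0 = 0 by rewrite /nm; ring.
  by split => _; [split; left|left].
have [k [Hn Hv Ha Hb Hk]] := nm_split nz.
split => [H|[H1 H2]].
  have := pF_ge Hn H; rewrite Hv => Hmk.
  by split; apply: (@pF_le m k) => //; lia.
right; rewrite Hv.
suff : m <= k by lia.
rewrite leNgt; apply/negP => Hlt; apply: Hk.
by split; apply: (@pF_le (k + 1) m) => //; lia.
Qed.

Definition re (z : E) : F := epsilon (inhabits 0) (fun a => exists b, z = io a + io b * s).
Definition im (z : E) : F := epsilon (inhabits 0) (fun b => z = io (re z) + io b * s).

Lemma coordE z : z = io (re z) + io (im z) * s.
Proof.
have H1 : exists b, z = io (re z) + io b * s.
  by apply: (epsilon_spec (inhabits 0) (fun a => exists b, z = io a + io b * s)); apply: (E_span D HD).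
exact: (epsilon_spec (inhabits 0) (fun b => z = io (re z) + io b * s) H1).
Qed.

Lemma s_sq : s ^+ 2 = io eps.
Proof. exact: (s_sq D HD). Qed.

Lemma s_neq0 : s != 0.
Proof.
apply/eqP => s0; have := s_sq; rewrite s0 expr2 mul0r => /esym/eqP.
rewrite fmorph_eq0; have [e0 _] := eps_unit D HD; by rewrite (negPf e0).
Qed.

Lemma coord_uniq a b a' b' : io a + io b * s = io a' + io b' * s -> a = a' /\ b = b'.
Proof.
move=> H.
have Hb : b = b'.
  apply/eqP; apply/negP => /negP nb.
  have nb' : io b' - io b != 0 by rewrite -rmorphB fmorph_eq0 subr_eq0 eq_sym.
  have Hs : s = io ((a - a') / (b' - b)).
    rewrite fmorph_div !rmorphB; apply: (canRL (mulfK nb')).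
    apply/eqP; rewrite -subr_eq0; apply/eqP.
    by transitivity (io a' + io b' * s - (io a + io b * s)); [ring|rewrite H subrr].
  have := s_sq; rewrite Hs -rmorphXn => /(fmorph_inj (uiota D)) /eqP.
  by rewrite (negPf (eps_nonsq D HD _)).
split=> //; subst b'.
by apply: (fmorph_inj (uiota D)); apply: (addIr (io b * s)).
Qed.

Lemma coord_eq z a b : z = io a + io b * s -> re z = a /\ im z = b.
Proof. by move=> H; apply: coord_uniq; rewrite -coordE. Qed.

Lemma cj_ab a b : cj (io a + io b * s) = io a - io b * s.
Proof. exact: (cj_def D HD). Qed.

Lemma cjE z : cj z = io (re z) - io (im z) * s.
Proof. by rewrite {1}(coordE z) cj_ab. Qed.

Ltac coord_tac := rewrite ?rmorphXn ?rmorphD ?rmorphB ?rmorphM ?rmorphN ?rmorphXn -?s_sq; ring.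

Lemma cjD z w : cj (z + w) = cj z + cj w.
Proof.
have -> : z + w = io (re z + re w) + io (im z + im w) * s.
  by rewrite {1}(coordE z) {1}(coordE w); coord_tac.
by rewrite cj_ab !cjE; coord_tac.
Qed.

Lemma cjM z w : cj (z * w) = cj z * cj w.
Proof.
have -> : z * w = io (re z * re w + eps * (im z * im w)) + io (re z * im w + im z * re w) * s.
  by rewrite {1}(coordE z) {1}(coordE w); coord_tac.
by rewrite cj_ab !cjE; coord_tac.
Qed.

Lemma cj_io a : cj (io a) = io a.
Proof. by have := cj_ab a 0; rewrite rmorph0 !mul0r addr0 subr0. Qed.

Lemma cj0 : cj 0 = 0.
Proof. by rewrite -(rmorph0 (uiota D)) cj_io. Qed.

Lemma cj1 : cj 1 = 1.
Proof. by rewrite -(rmorph1 (uiota D)) cj_io. Qed.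

Lemma cj_s : cj s = - s.
Proof. by have := cj_ab 0 1; rewrite rmorph0 rmorph1 !mul1r !add0r. Qed.

Lemma cjN z : cj (- z) = - cj z.
Proof. by rewrite -mulN1r cjM -(rmorph1 (uiota D)) -rmorphN cj_io rmorphN rmorph1 mulN1r. Qed.

Lemma cjB z w : cj (z - w) = cj z - cj w.
Proof. by rewrite cjD cjN. Qed.

Lemma cjK z : cj (cj z) = z.
Proof.
transitivity (io (re z) + io (im z) * s); last by rewrite -coordE.
by rewrite [cj z]cjE cjB cjM cj_s !cj_io mulrN opprK.
Qed.

Lemma cj_eq0 z : (cj z == 0) = (z == 0).
Proof.
apply/eqP/eqP => [H|->]; last exact: cj0.
by rewrite -[z]cjK H cj0.
Qed.

Lemma cjV z : cj (z^-1) = (cj z)^-1.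
Proof.
case: (eqVneq z 0) => [->|zn0]; first by rewrite invr0 cj0 invr0.
have cn0 : cj z != 0 by rewrite cj_eq0.
apply: (mulfI cn0); rewrite -cjM !mulfV // cj1 //.
Qed.

Lemma norm_coord z : z * cj z = io (nm (re z) (im z)).
Proof. rewrite cjE {1}(coordE z) /nm rmorphB !rmorphXn rmorphM -s_sq; ring. Qed.

Lemma pE_coord (m : nat) z : pE m z <-> pF m (re z) /\ pF m (im z).
Proof.
rewrite -nm_pF /inPE norm_coord; split.
  by case=> c [/(fmorph_inj (uiota D)) -> H]; rewrite -PoszD addnn -mul2n.
by move=> H; exists (nm (re z) (im z)); split=> //; rewrite mul2n -addnn PoszD.
Qed.

Lemma pE_ab (m : nat) a b : pE m (io a + io b * s) <-> pF m a /\ pF m b.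
Proof. by rewrite pE_coord; have [-> ->] := coord_eq (erefl (io a + io b * s)). Qed.

Lemma pE0 m : pE m 0.
Proof.
apply/pE_coord; have [-> ->] : re 0 = 0 /\ im 0 = 0 by apply: coord_eq; rewrite rmorph0 mul0r addr0.
by split; left.
Qed.

Lemma pE_le (m k : nat) z : (k <= m)%N -> pE m z -> pE k z.
Proof. by move=> km; rewrite !pE_coord => -[h1 h2]; split; apply: (@pF_le k m) => //; rewrite lez_nat. Qed.

Lemma coordD z w : re (z + w) = re z + re w /\ im (z + w) = im z + im w.
Proof. by apply: coord_eq; rewrite {1}(coordE z) {1}(coordE w); coord_tac. Qed.

Lemma coordN z : re (- z) = - re z /\ im (- z) = - im z.
Proof. by apply: coord_eq; rewrite {1}(coordE z); coord_tac. Qed.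

Lemma coordM z w : re (z * w) = re z * re w + eps * (im z * im w) /\
  im (z * w) = re z * im w + im z * re w.
Proof. by apply: coord_eq; rewrite {1}(coordE z) {1}(coordE w); coord_tac. Qed.

Lemma coord_io a : re (io a) = a /\ im (io a) = 0.
Proof. by apply: coord_eq; rewrite rmorph0 mul0r addr0. Qed.

Lemma coord_sio a : re (s * io a) = 0 /\ im (s * io a) = a.
Proof. by apply: coord_eq; rewrite rmorph0 add0r mulrC. Qed.

Lemma coord_cj z : re (cj z) = re z /\ im (cj z) = - im z.
Proof. by apply: coord_eq; rewrite cjE; coord_tac. Qed.

Lemma pED m z w : pE m z -> pE m w -> pE m (z + w).
Proof.
rewrite !pE_coord; have [-> ->] := coordD z w.
by case=> ? ? [? ?]; split; apply: pFD.
Qed.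

Lemma pEN m z : pE m (- z) <-> pE m z.
Proof. rewrite !pE_coord; have [-> ->] := coordN z; by rewrite !pFN. Qed.

Lemma pEB m z w : pE m z -> pE m w -> pE m (z - w).
Proof. by move=> h1 h2; apply: pED => //; apply/pEN. Qed.

Lemma pEM (m k : nat) z w : pE m z -> pE k w -> pE (m + k) (z * w).
Proof.
rewrite !pE_coord; have [-> ->] := coordM z w.
case=> h1 h2 [h3 h4]; rewrite PoszD; split; apply: pFD; try by apply: pFM.
by rewrite -[X in pF X]add0r; apply: pFM; [exact: pF_eps| apply: pFM].
Qed.

Lemma pEM0 (m : nat) z w : pE 0 z -> pE m w -> pE m (z * w).
Proof. by move=> h1 h2; have := pEM h1 h2; rewrite add0n. Qed.

Lemma pEM0r (m : nat) z w : pE m z -> pE 0 w -> pE m (z * w).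
Proof. by move=> h1 h2; have := pEM h1 h2; rewrite addn0. Qed.

Lemma pE_cj m z : pE m (cj z) <-> pE m z.
Proof. rewrite !pE_coord; have [-> ->] := coord_cj z; by rewrite pFN. Qed.

Lemma pE_io m a : pE m (io a) <-> pF m a.
Proof. rewrite !pE_coord; have [-> ->] := coord_io a; by split; [case|split => //; left]. Qed.

Lemma pE_sio m a : pE m (s * io a) <-> pF m a.
Proof. rewrite !pE_coord; have [-> ->] := coord_sio a; by split; [case|split => //; left]. Qed.

Lemma pE01 : pE 0 1.
Proof. by rewrite -(rmorph1 (uiota D)) pE_io; exact: pF1. Qed.

Lemma pE1n : ~ pE 1 1.
Proof. by rewrite -(rmorph1 (uiota D)) pE_io; exact: pF1n. Qed.

Lemma pE_s : pE 0 s.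
Proof. by rewrite -[s]mulr1 -(rmorph1 (uiota D)) pE_sio; exact: pF1. Qed.

Lemma pE_inv w : pE 0 w -> ~ pE 1 w -> w != 0 /\ pE 0 w^-1.
Proof.
move=> /pE_coord [h0a h0b]; rewrite pE_coord => h1.
have nz : (re w != 0) || (im w != 0).
  rewrite -negb_and; apply/negP => /andP [/eqP e1 /eqP e2]; apply: h1.
  by rewrite e1 e2; split; left.
have [k [Hn Hv Ha Hb Hk]] := nm_split nz.
have k0 : k = 0.
  apply/eqP; rewrite eq_le; apply/andP; split.
    rewrite leNgt; apply/negP => k1; apply: h1.
    by split; apply: (@pF_le 1 k) => //; lia.
  rewrite leNgt; apply/negP => k1; apply: Hk.
  by split; apply: (@pF_le (k + 1) 0) => //; lia.
set c := nm (re w) (im w) in Hn Hv.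
have Nw := norm_coord w; rewrite -/c in Nw.
have wn0 : w != 0.
  apply/eqP => w0; move: Nw; rewrite w0 mul0r => /esym/eqP; rewrite fmorph_eq0.
  by rewrite (negPf Hn).
split=> //.
have -> : w^-1 = cj w * io c^-1.
  apply: (mulfI wn0); rewrite mulfV // mulrA Nw -rmorphM mulfV ?rmorph1 //.
apply: (@pEM0 0).
  by apply/pE_cj; apply/pE_coord.
by apply/pE_io; right; rewrite vV // Hv k0.
Qed.

Local Notation i0 := (@ord0 1).
Local Notation i1 := (@ord_max 1).
Local Notation w := (wmx D).

Definition m2 (a b c d : E) : 'M[E]_2 :=
  \matrix_(i, j) if i == i0 then (if j == i0 then a else b) else (if j == i0 then c else d).

Lemma ord2_cases (i : 'I_2) : i = i0 \/ i = i1.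
Proof.
case: i => [[|[|k]] Hi]; [left|right|by []]; exact: val_inj.
Qed.

Lemma m2E a b c d : [/\ m2 a b c d i0 i0 = a, m2 a b c d i0 i1 = b,
  m2 a b c d i1 i0 = c & m2 a b c d i1 i1 = d].
Proof. by rewrite !mxE. Qed.

Lemma m2_00 a b c d : m2 a b c d i0 i0 = a. Proof. by rewrite mxE. Qed.
Lemma m2_01 a b c d : m2 a b c d i0 i1 = b. Proof. by rewrite mxE. Qed.
Lemma m2_10 a b c d : m2 a b c d i1 i0 = c. Proof. by rewrite mxE. Qed.
Lemma m2_11 a b c d : m2 a b c d i1 i1 = d. Proof. by rewrite mxE. Qed.

Lemma m2_eta (M : 'M[E]_2) : M = m2 (M i0 i0) (M i0 i1) (M i1 i0) (M i1 i1).
Proof.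
apply/matrixP => i j; rewrite mxE.
by case: (ord2_cases i) => ->; case: (ord2_cases j) => ->.
Qed.

Lemma sum2 (f : 'I_2 -> E) : \sum_(k < 2) f k = f i0 + f i1.
Proof.
rewrite big_ord_recl big_ord_recl big_ord0 addr0.
by congr (_ + f _); apply: val_inj.
Qed.

Lemma m2_mul a b c d a' b' c' d' :
  m2 a b c d *m m2 a' b' c' d' =
  m2 (a * a' + b * c') (a * b' + b * d') (c * a' + d * c') (c * b' + d * d').
Proof.
apply/matrixP => i j; rewrite !mxE sum2 !mxE.
by case: (ord2_cases i) => ->; case: (ord2_cases j) => ->.
Qed.

Lemma m2_inj a b c d a' b' c' d' : m2 a b c d = m2 a' b' c' d' ->
  [/\ a = a', b = b', c = c' & d = d'].
Proof.
move=> H; have [h1 h2 h3 h4] := m2E a b c d; rewrite H in h1 h2 h3 h4.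
have [h1' h2' h3' h4'] := m2E a' b' c' d'.
by split; [rewrite -h1 h1'|rewrite -h2 h2'|rewrite -h3 h3'|rewrite -h4 h4'].
Qed.

Lemma w_m2 : w = m2 0 1 1 0.
Proof.
by apply/matrixP => i j; rewrite !mxE; case: (ord2_cases i) => ->; case: (ord2_cases j) => ->.
Qed.

Lemma one_m2 : (1%:M : 'M[E]_2) = m2 1 0 0 1.
Proof.
by apply/matrixP => i j; rewrite !mxE; case: (ord2_cases i) => ->; case: (ord2_cases j) => ->.
Qed.

Lemma map_m2 a b c d : map_mx cj (m2 a b c d) = m2 (cj a) (cj b) (cj c) (cj d).
Proof.
by apply/matrixP => i j; rewrite !mxE; case: (ord2_cases i) => ->; case: (ord2_cases j) => ->.
Qed.

Lemma tr_m2 a b c d : (m2 a b c d)^T = m2 a c b d.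
Proof.
by apply/matrixP => i j; rewrite !mxE; case: (ord2_cases i) => ->; case: (ord2_cases j) => ->.
Qed.

Definition star (g : 'M[E]_2) := (map_mx cj g)^T.

Lemma star_m2 a b c d : star (m2 a b c d) = m2 (cj a) (cj c) (cj b) (cj d).
Proof. by rewrite /star map_m2 tr_m2. Qed.

Lemma starM g h : star (g *m h) = star h *m star g.
Proof.
rewrite (m2_eta g) (m2_eta h) !m2_mul !star_m2 m2_mul !cjD !cjM.
by congr m2; ring.
Qed.

Lemma starK g : star (star g) = g.
Proof. by rewrite (m2_eta g) !star_m2 !cjK. Qed.

Lemma star_w : star w = w.
Proof. by rewrite w_m2 star_m2 cj0 cj1. Qed.

Lemma star1 : star 1%:M = 1%:M.
Proof. by rewrite one_m2 star_m2 cj0 cj1. Qed.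

Lemma w_w : w *m w = 1%:M.
Proof. rewrite w_m2 m2_mul one_m2; congr m2; ring. Qed.

Local Notation G := (inG D).

Lemma inGE g : G g <-> star g *m w *m g = w.
Proof. by []. Qed.

Lemma G_mul g h : G g -> G h -> G (g *m h).
Proof.
rewrite !inGE => Hg Hh; rewrite starM.
by rewrite -!mulmxA (mulmxA (star g)) (mulmxA (star g *m w)) Hg mulmxA.
Qed.

Definition ginv g := w *m star g *m w.

Lemma G_invl g : G g -> ginv g *m g = 1%:M.
Proof. by rewrite inGE /ginv => Hg; rewrite -mulmxA -mulmxA (mulmxA (star g)) Hg w_w. Qed.

Lemma G_invr g : G g -> g *m ginv g = 1%:M.
Proof. by move=> Hg; apply: mulmx1C; apply: G_invl. Qed.

Lemma G1 : G 1%:M.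
Proof. by rewrite inGE star1 mul1mx mulmx1. Qed.

Lemma ginv_m2 a b c d : ginv (m2 a b c d) = m2 (cj d) (cj b) (cj c) (cj a).
Proof. rewrite /ginv star_m2 w_m2 !m2_mul; congr m2; ring. Qed.

Lemma inG_m2 a b c d : G (m2 a b c d) <-> [/\ cj c * a + cj a * c = 0,
  cj c * b + cj a * d = 1, cj d * a + cj b * c = 1 & cj d * b + cj b * d = 0].
Proof.
rewrite inGE star_m2 w_m2 !m2_mul !(mulr0, mulr1, addr0, add0r).
split; first by move/m2_inj => [-> -> -> ->].
by case=> -> -> -> ->.
Qed.

Lemma G_ginv g : G g -> G (ginv g).
Proof.
move=> Hg; have Hr := G_invr Hg.
move: Hr; rewrite (m2_eta g) ginv_m2 m2_mul one_m2 => /m2_inj [h1 h2 h3 h4].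
rewrite inG_m2 !cjK; split.
- by rewrite mulrC [cj _ * _]mulrC.
- by rewrite mulrC [cj _ * _]mulrC.
- by rewrite mulrC [cj _ * _]mulrC.
- by rewrite mulrC [cj _ * _]mulrC.
Qed.

Local Notation B := (inB D).

Lemma B_mul b b' : B b -> B b' -> B (b *m b').
Proof.
move=> [Gb b0] [Gb' b0']; split; first exact: G_mul.
by rewrite (m2_eta b) (m2_eta b') m2_mul; rewrite m2_10; rewrite b0 b0' mul0r mulr0 addr0.
Qed.

Lemma B_ginv b : B b -> B (ginv b).
Proof.
move=> [Gb b0]; split; first exact: G_ginv.
by rewrite (m2_eta b) ginv_m2; rewrite m2_10; rewrite b0 cj0.
Qed.

Lemma B1 : B 1%:M.
Proof. by split; [exact: G1| rewrite one_m2; rewrite m2_10]. Qed.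

Lemma B_diag b : B b -> cj (b i0 i0) * b i1 i1 = 1.
Proof.
move=> [Gb b0]; move: Gb; rewrite {1}(m2_eta b) inG_m2 => -[_ h _ _].
by rewrite b0 cj0 mul0r add0r in h.
Qed.

Lemma B_diag0 b : B b -> b i0 i0 != 0 /\ b i1 i1 != 0.
Proof.
move=> Bb; have h := B_diag Bb.
split; apply/eqP => e; move: h; rewrite e ?cj0 ?mul0r ?mulr0 => /eqP; by rewrite eq_sym oner_eq0.
Qed.

Lemma B00 b b' : B b -> B b' -> (b *m b') i0 i0 = b i0 i0 * b' i0 i0.
Proof.
move=> [_ b0] [_ b0']; rewrite {1}(m2_eta b) {1}(m2_eta b') m2_mul m2_00.
by rewrite b0' mulr0 addr0.
Qed.

Lemma B_row b (M : 'M[E]_2) (j : 'I_2) : B b -> (b *m M) i1 j = b i1 i1 * M i1 j.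
Proof.
move=> [_ b0]; rewrite !mxE sum2 b0 mul0r add0r //.
Qed.

Local Notation K := (inK D).

Lemma inK_E m k : K m k <-> G k /\ [/\ pE m (k i0 i0 - 1), pE m (k i0 i1),
  pE m (k i1 i0) & pE m (k i1 i1 - 1)].
Proof.
split.
  case=> Gk H; split=> //; split.
  - by have := H i0 i0.
  - by have := H i0 i1; rewrite subr0.
  - by have := H i1 i0; rewrite subr0.
  - by have := H i1 i1.
case=> Gk [h1 h2 h3 h4]; split=> // i j.
by case: (ord2_cases i) => ->; case: (ord2_cases j) => ->; rewrite //= subr0.
Qed.

Lemma pEMm m z z' : pE m z -> pE m z' -> pE m (z * z').
Proof. by move=> h1 h2; apply: (@pE_le (m + m)); [rewrite leq_addr | apply: pEM]. Qed.

Lemma K_mul m k k' : K m k -> K m k' -> K m (k *m k').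
Proof.
rewrite !inK_E => -[Gk [h1 h2 h3 h4]] [Gk' [h1' h2' h3' h4']].
split; first exact: G_mul.
rewrite (m2_eta k) (m2_eta k') m2_mul; rewrite m2_00 m2_01 m2_10 m2_11.
set a := k i0 i0; set b := k i0 i1; set c := k i1 i0; set d := k i1 i1.
set a' := k' i0 i0; set b' := k' i0 i1; set c' := k' i1 i0; set d' := k' i1 i1.
split.
- have -> : a * a' + b * c' - 1 = (a - 1) * (a' - 1) + (a - 1) + (a' - 1) + b * c' by ring.
  by set A := a - 1; set A' := a' - 1; set D' := d' - 1; set D0 := d - 1; repeat apply: pED => //; apply: pEMm.
- have -> : a * b' + b * d' = (a - 1) * b' + b' + b * (d' - 1) + b by ring.
  by set A := a - 1; set A' := a' - 1; set D' := d' - 1; set D0 := d - 1; repeat apply: pED => //; apply: pEMm.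
- have -> : c * a' + d * c' = c * (a' - 1) + c + (d - 1) * c' + c' by ring.
  by set A := a - 1; set A' := a' - 1; set D' := d' - 1; set D0 := d - 1; repeat apply: pED => //; apply: pEMm.
- have -> : c * b' + d * d' - 1 = c * b' + (d - 1) * (d' - 1) + (d - 1) + (d' - 1) by ring.
  by set A := a - 1; set A' := a' - 1; set D' := d' - 1; set D0 := d - 1; repeat apply: pED => //; apply: pEMm.
Qed.

Lemma K_ginv m k : K m k -> K m (ginv k).
Proof.
rewrite !inK_E => -[Gk [h1 h2 h3 h4]]; split; first exact: G_ginv.
rewrite (m2_eta k) ginv_m2; rewrite m2_00 m2_01 m2_10 m2_11.
by rewrite -cj1 -!cjB; split; apply/pE_cj.
Qed.

Lemma K1 m : K m 1%:M.
Proof.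
rewrite inK_E one_m2; rewrite m2_00 m2_01 m2_10 m2_11; rewrite subrr.
by split; [rewrite -one_m2; exact: G1 | split; exact: pE0].
Qed.

Definition pi : F := epsilon (inhabits 0) (fun p => p != 0 /\ v p = 1).

Lemma pi_spec : pi != 0 /\ v pi = 1.
Proof.
apply: (epsilon_spec (inhabits 0) (fun p => p != 0 /\ v p = 1)).
have [p [h1 h2]] := val_unif D HD; by exists p.
Qed.

Definition RP (reps : seq F) := size reps = q /\
      (forall x, x \in reps -> pF 0 x) /\
      (forall i j, (i < q)%N -> (j < q)%N ->
         pF 1 (nth 0 reps i - nth 0 reps j) -> i = j) /\
      (forall x, pF 0 x -> exists i, (i < q)%N /\ pF 1 (x - nth 0 reps i)).

Definition reps : seq F := epsilon (inhabits [::]) RP.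

Lemma reps_spec : RP reps.
Proof. apply: epsilon_spec; exact: (residue_card D HD). Qed.

Definition rd i := nth 0 reps i.

Lemma q_gt0 : (0 < q)%N.
Proof. by have := q_odd D HD; case: (uq D). Qed.

Lemma rd_int i : (i < q)%N -> pF 0 (rd i).
Proof.
have [Hs [Hi _]] := reps_spec; move=> iq; apply: Hi; rewrite mem_nth // Hs //.
Qed.

Lemma rd_uniq i j : (i < q)%N -> (j < q)%N -> pF 1 (rd i - rd j) -> i = j.
Proof. by have [_ [_ [H _]]] := reps_spec; apply: H. Qed.

Lemma rd_cover x : pF 0 x -> exists i, (i < q)%N /\ pF 1 (x - rd i).
Proof. by have [_ [_ [_ H]]] := reps_spec; apply: H. Qed.

Fixpoint Y (n m : nat) : F := if n is n'.+1 then rd (m %% q) + pi * Y n' (m %/ q) else 0.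

Lemma pF_pi : pF 1 pi.
Proof. by right; rewrite (proj2 pi_spec). Qed.

Lemma Y_int n m : pF 0 (Y n m).
Proof.
elim: n m => [|n IH] m /=; first by left.
apply: pFD; first by apply: rd_int; rewrite ltn_pmod // q_gt0.
rewrite -[X in pF X]addr0; apply: pFM; last exact: IH.
by apply: (@pF_le 0 1) => //; exact: pF_pi.
Qed.

Lemma Y_cover n y : pF 0 y -> exists m, (m < q ^ n)%N /\ pF n (y - Y n m).
Proof.
elim: n y => [|n IH] y Hy; first by exists 0%N; rewrite expn0 /= subr0.
have [i [iq Hi]] := rd_cover Hy.
have [pin0 vpi] := pi_spec.
set y' := (y - rd i) / pi.
have Hy' : pF 0 y' by have := pF_div Hi pin0; rewrite vpi subrr.
have [m' [Hm' Hc]] := IH y' Hy'.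
exists (m' * q + i)%N; split.
  rewrite expnSr; have := q_gt0; nia.
rewrite /= modnMDl divnMDl ?q_gt0 // modn_small // divn_small // addn0.
have -> : y - (rd i + pi * Y n m') = pi * (y' - Y n m').
  by rewrite /y' mulrBr [pi * (_ / pi)]mulrC divfK //; ring.
have -> : (n.+1 : int) = 1 + n%:Z by lia.
by apply: pFM => //; exact: pF_pi.
Qed.

Lemma Y_uniq n m m' : (m < q ^ n)%N -> (m' < q ^ n)%N -> pF n (Y n m - Y n m') -> m = m'.
Proof.
elim: n m m' => [|n IH] m m'.
  by rewrite expn0 !ltnS !leqn0 => /eqP -> /eqP ->.
rewrite expnSr => Hm Hm' /= H.
have qp := q_gt0.
have [pin0 vpi] := pi_spec.
have E : rd (m %% q) + pi * Y n (m %/ q) - (rd (m' %% q) + pi * Y n (m' %/ q)) =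
  (rd (m %% q) - rd (m' %% q)) + pi * (Y n (m %/ q) - Y n (m' %/ q)) by ring.
rewrite E in H.
have H2 : pF 1 (pi * (Y n (m %/ q) - Y n (m' %/ q))).
  rewrite -[X in pF X]addr0; apply: pFM; first exact: pF_pi.
  by apply: pFB; apply: Y_int.
have Hr : (m %% q = m' %% q)%N.
  apply: rd_uniq; rewrite ?ltn_mod //.
  have -> : rd (m %% q) - rd (m' %% q) = (rd (m %% q) - rd (m' %% q) + pi * (Y n (m %/ q) - Y n (m' %/ q))) - pi * (Y n (m %/ q) - Y n (m' %/ q)) by ring.
  by apply: pFB => //; apply: (@pF_le 1 n.+1) => //; lia.
rewrite Hr subrr add0r in H.
have Hd : (m %/ q = m' %/ q)%N.
  apply: IH; rewrite ?ltn_divLR //.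
  have := pF_div H pin0; rewrite vpi mulrC mulKf //.
  by have -> : (n.+1 : int) - 1 = n by lia.
by rewrite (divn_eq m q) (divn_eq m' q) Hr Hd.
Qed.

Definition Rm (y : F) := m2 1 0 (s * io y) 1.
Definition Sm (x : F) := m2 0 1 1 (s * io x).
Definition Um (t : F) := m2 1 (s * io t) 0 1.

Lemma cj_sio y : cj (s * io y) = - (s * io y).
Proof. by rewrite cjM cj_s cj_io mulNr. Qed.

Lemma R_G y : G (Rm y).
Proof. by rewrite inG_m2 cj_sio cj0 cj1; split; ring. Qed.

Lemma S_G x : G (Sm x).
Proof. by rewrite inG_m2 cj_sio cj0 cj1; split; ring. Qed.

Lemma U_G t : G (Um t).
Proof. by rewrite inG_m2 cj_sio cj0 cj1; split; ring. Qed.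

Lemma R_add y y' : Rm y *m Rm y' = Rm (y + y').
Proof. by rewrite /Rm m2_mul rmorphD; congr m2; ring. Qed.

Lemma R0 : Rm 0 = 1%:M.
Proof. by rewrite /Rm rmorph0 mulr0 one_m2. Qed.

Lemma S_U x t : Sm x *m Um t = Sm (x + t).
Proof. by rewrite /Sm /Um m2_mul rmorphD; congr m2; ring. Qed.

Lemma R_K (m : nat) t : pF m t -> K m (Rm t).
Proof.
move=> Ht; rewrite inK_E; split; first exact: R_G.
rewrite /Rm m2_00 m2_01 m2_10 m2_11 subrr; split; try exact: pE0.
by apply/pE_sio.
Qed.

Lemma U_K (m : nat) t : pF m t -> K m (Um t).
Proof.
move=> Ht; rewrite inK_E; split; first exact: U_G.
rewrite /Um m2_00 m2_01 m2_10 m2_11 subrr; split; try exact: pE0.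
by apply/pE_sio.
Qed.

Section Rep.
Variable n : nat.
Hypothesis n_gt0 : (0 < n)%N.

Definition NN := (q ^ n.-1 * q.+1)%N.

Lemma NN_E : NN = (q ^ n + q ^ n.-1)%N.
Proof. by rewrite /NN -(prednK n_gt0) /= mulnS expnSr addnC mulnC. Qed.

Definition rep (j : nat) :=
  if (j < q ^ n)%N then Rm (Y n j) else Sm (pi * Y n.-1 (j - q ^ n)).

Lemma rep_G j : G (rep j).
Proof. by rewrite /rep; case: ifP => _; [exact: R_G|exact: S_G]. Qed.

Lemma decR g y : G g -> g i1 i0 = g i1 i1 * (s * io y) -> pF 0 y ->
  exists j, (j < NN)%N /\ exists b k, B b /\ K n k /\ g = b *m rep j *m k.
Proof.
move=> Gg Hc Hy.
have [m [Hm Hcov]] := Y_cover n Hy.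
exists m; split; first by rewrite NN_E ltn_addr.
exists (g *m Rm (- y)), (Rm (y - Y n m)); split; last split.
- split; first by apply: G_mul => //; exact: R_G.
  by rewrite {1}(m2_eta g) /Rm m2_mul m2_10 Hc rmorphN; ring.
- exact: (R_K Hcov).
- rewrite /rep Hm -!mulmxA !R_add.
  have -> : - y + (Y n m + (y - Y n m)) = 0 by ring.
  by rewrite R0 mulmx1.
Qed.

Lemma decS g x : G g -> g i1 i1 = g i1 i0 * (s * io x) -> pF 1 x ->
  exists j, (j < NN)%N /\ exists b k, B b /\ K n k /\ g = b *m rep j *m k.
Proof.
move=> Gg Hd Hx.
have [pin0 vpi] := pi_spec.
set x1 := x / pi.
have Hx1 : pF 0 x1 by have := pF_div Hx pin0; rewrite vpi subrr.
have [m [Hm Hcov]] := Y_cover n.-1 Hx1.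
exists (q ^ n + m)%N; split; first by rewrite NN_E ltn_add2l.
exists (g *m ginv (Sm x)), (Um (x - pi * Y n.-1 m)); split; last split.
- split; first by apply: G_mul => //; apply: G_ginv; exact: S_G.
  by rewrite {1}(m2_eta g) /Sm ginv_m2 m2_mul m2_10 Hd cj_sio cj1; ring.
- apply: U_K.
  have -> : x - pi * Y n.-1 m = pi * (x1 - Y n.-1 m) by rewrite /x1 mulrBr [pi * (_ / pi)]mulrC divfK.
  have -> : (n : int) = 1 + (n.-1)%:Z by rewrite -(prednK n_gt0); lia.
  by apply: pFM => //; exact: pF_pi.
- rewrite /rep ltnNge leq_addr /= addKn -mulmxA S_U.
  have -> : pi * Y n.-1 m + (x - pi * Y n.-1 m) = x by ring.
  by rewrite -mulmxA G_invl ?mulmx1 //; exact: S_G.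
Qed.

Lemma decomp g : G g ->
  exists j, (j < NN)%N /\ exists b k, B b /\ K n k /\ g = b *m rep j *m k.
Proof.
move=> Gg.
have Hr := G_invr Gg.
rewrite (m2_eta g) ginv_m2 m2_mul one_m2 in Hr.
case/m2_inj: Hr => _ _ h3 h4.
case: (eqVneq (g i1 i1) 0) => [d0|dn0].
  apply: (@decS g 0) => //; last by left.
  by rewrite rmorph0 !mulr0 d0.
set u := g i1 i0 / g i1 i1.
have cdn0 : cj (g i1 i1) != 0 by rewrite cj_eq0.
have Hu : u + cj u = 0.
  have : (u + cj u) * (g i1 i1 * cj (g i1 i1)) = 0.
    by rewrite -h3 /u cjM cjV; field; rewrite dn0 cdn0.
  by move/eqP; rewrite !mulf_eq0 (negPf dn0) (negPf cdn0) !orbF => /eqP.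
have Hre : re u = 0.
  move: Hu; rewrite cjE {1}(coordE u).
  have -> : io (re u) + io (im u) * s + (io (re u) - io (im u) * s) = io (re u * 2) by rewrite rmorphM; coord_tac.
  move/eqP; rewrite fmorph_eq0 mulf_eq0 (negPf two_neq0) orbF => /eqP //.
set y := im u.
have Hc : g i1 i0 = g i1 i1 * (s * io y).
  have -> : s * io y = u by rewrite (coordE u) Hre rmorph0 add0r mulrC.
  by rewrite /u mulrC divfK.
case: (excluded_middle_informative (pF 0 y)) => Hy0.
  by apply: (@decR g y).
have yn0 : y != 0 by apply/eqP => y0; apply: Hy0; rewrite y0; left.
have Hy : ~~ (0 <= v y) by apply/negP => h; apply: Hy0; right.
have [e0 ve] := eps_unit D HD.
have eyn0 : eps * y != 0 by rewrite mulf_neq0.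
apply: (@decS g ((eps * y)^-1)) => //.
  have E1 : s * io y * (s * io ((eps * y)^-1)) = 1.
    have -> : s * io y * (s * io ((eps * y)^-1)) = io (eps * y * (eps * y)^-1).
      by rewrite !rmorphM -s_sq; ring.
    by rewrite mulfV // rmorph1.
  by rewrite Hc -mulrA E1 mulr1.
right; rewrite vV // vM // ve add0r.
move: Hy; rewrite -ltNge; lia.
Qed.

Lemma pE_n0 z : pE n z -> pE 0 z.
Proof. exact: pE_le. Qed.

Lemma pE_n1 z : pE n z -> pE 1 z.
Proof. exact: pE_le. Qed.

Lemma pE_sub1 z : pE n (z - 1) -> pE 0 z.
Proof.
move=> h; have -> : z = (z - 1) + 1 by ring.
by apply: pED; [exact: pE_n0|exact: pE01].
Qed.

Lemma one_not z : pE 1 z -> pE 1 (z - 1) -> False.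
Proof.
move=> h1 h2; apply: pE1n; have -> : (1 : E) = z - (z - 1) by ring.
by apply: pEB.
Qed.

Lemma idxS j : (j < NN)%N -> ~~ (j < q ^ n)%N -> (j - q ^ n < q ^ n.-1)%N.
Proof. rewrite NN_E -leqNgt; lia. Qed.

Lemma pE_sY m : pE 0 (s * io (Y n m)).
Proof. by apply/pE_sio; exact: Y_int. Qed.

Lemma pE_sX m : pE 1 (s * io (pi * Y n.-1 m)).
Proof.
apply/pE_sio; rewrite -[X in pF X]addr0; apply: pFM; [exact: pF_pi|exact: Y_int].
Qed.

Lemma bot_uniq j j' k mu : (j < NN)%N -> (j' < NN)%N -> K n k ->
  (rep j *m k) i1 i0 = mu * rep j' i1 i0 -> (rep j *m k) i1 i1 = mu * rep j' i1 i1 ->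
  j = j' /\ pE n (mu - 1).
Proof.
move=> Hj Hj' /inK_E [Gk [ha hb hc hd]].
rewrite (m2_eta k).
set a := k i0 i0 in ha *; set b := k i0 i1 in hb *.
set c := k i1 i0 in hc *; set d := k i1 i1 in hd *.
have a0 := pE_sub1 ha; have d0 := pE_sub1 hd.
case: (boolP (j < q ^ n)%N) => Hjq; case: (boolP (j' < q ^ n)%N) => Hjq'.
-
  have -> : rep j = Rm (Y n j) by rewrite /rep Hjq.
  have -> : rep j' = Rm (Y n j') by rewrite /rep Hjq'.
  rewrite /Rm m2_mul m2_10 m2_11 m2_10 m2_11 !mul1r mulr1 => e1 e2.
  set y := Y n j in e1 e2; set y' := Y n j' in e1 e2.
  have hmu : pE n (mu - 1).
    have -> : mu - 1 = s * io y * b + (d - 1) by rewrite -e2; ring.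
    by apply: pED => //; apply: pEM0 => //; exact: pE_sY.
  split=> //.
  apply: (Y_uniq Hjq Hjq'); apply/(pE_sio n).
  have -> : s * io (y - y') = (mu - 1) * (s * io y') - s * io y * (a - 1) - c.
    rewrite rmorphB; apply/eqP; rewrite -subr_eq0; apply/eqP.
    transitivity (s * io y * a + c - mu * (s * io y')); first by ring.
    by rewrite e1 subrr.
  apply: pEB => //; apply: pEB.
    by apply: pEM0r => //; exact: pE_sY.
  by apply: pEM0 => //; exact: pE_sY.
-
  have -> : rep j = Rm (Y n j) by rewrite /rep Hjq.
  have -> : rep j' = Sm (pi * Y n.-1 (j' - q ^ n)) by rewrite /rep (negPf Hjq').
  rewrite /Rm /Sm m2_mul m2_10 m2_11 m2_10 m2_11 !mul1r mulr1 => e1 e2.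
  exfalso.
  set y := Y n j in e1 e2; set x' := pi * Y n.-1 (j' - q ^ n) in e2.
  have hmu : pE 0 mu.
    rewrite -e1; apply: pED; [apply: pEM0 => //; exact: pE_sY | exact: pE_n0].
  apply: pE1n.
  have -> : (1 : E) = mu * (s * io x') - s * io y * b - (d - 1).
    apply/eqP; rewrite -subr_eq0; apply/eqP.
    transitivity (s * io y * b + d - mu * (s * io x')); first by ring.
    by rewrite e2 subrr.
  apply: pEB; last exact: pE_n1.
  apply: pEB; first by apply: pEM0 => //; exact: pE_sX.
  by apply: pEM0; [exact: pE_sY|exact: pE_n1].
-
  have -> : rep j = Sm (pi * Y n.-1 (j - q ^ n)) by rewrite /rep (negPf Hjq).
  have -> : rep j' = Rm (Y n j') by rewrite /rep Hjq'.
  rewrite /Rm /Sm m2_mul m2_10 m2_11 m2_10 m2_11 !mul1r mulr1 => e1 e2.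
  exfalso.
  set y' := Y n j' in e1 e2; set x := pi * Y n.-1 (j - q ^ n) in e1 e2.
  have hmu : pE 1 mu.
    rewrite -e2; apply: pED; [exact: pE_n1 | apply: pEM0r => //; exact: pE_sX].
  apply: (@one_not a); last exact: pE_n1.
  have -> : a = mu * (s * io y') - s * io x * c.
    apply/eqP; rewrite -subr_eq0; apply/eqP.
    transitivity (a + s * io x * c - mu * (s * io y')); first by ring.
    by rewrite e1 subrr.
  apply: pEB; first by apply: pEM0r => //; exact: pE_sY.
  by apply: pEM0r; [exact: pE_sX|exact: pE_n0].
-
  have -> : rep j = Sm (pi * Y n.-1 (j - q ^ n)) by rewrite /rep (negPf Hjq).
  have -> : rep j' = Sm (pi * Y n.-1 (j' - q ^ n)) by rewrite /rep (negPf Hjq').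
  rewrite /Sm m2_mul m2_10 m2_11 m2_10 m2_11 !mul1r mulr1 => e1 e2.
  set x := pi * Y n.-1 (j - q ^ n) in e1 e2; set x' := pi * Y n.-1 (j' - q ^ n) in e1 e2.
  have hmu : pE n (mu - 1).
    have -> : mu - 1 = (a - 1) + s * io x * c by rewrite -e1; ring.
    apply: pED => //; apply: pEM0 => //; apply: pE_le (pE_sX _) => //.
  split=> //.
  have Hx : pF n (x' - x).
    apply/(pE_sio n).
    have -> : s * io (x' - x) = (s * io x') * (- (mu - 1)) + b + s * io x * (d - 1).
      rewrite rmorphB; apply/eqP; rewrite -subr_eq0; apply/eqP.
      transitivity (mu * (s * io x') - (b + s * io x * d)); first by ring.
      by rewrite e2 subrr.
    apply: pED; last by apply: pEM0 => //; apply: pE_le (pE_sX _) => //.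
    apply: pED => //; apply: pEM0; first by apply: pE_le (pE_sX _) => //.
    exact/pEN.
  have [pin0 vpi] := pi_spec.
  have Hx2 : pF n.-1 (Y n.-1 (j' - q ^ n) - Y n.-1 (j - q ^ n)).
    have := pF_div Hx pin0; rewrite vpi /x /x'.
    have -> : (pi * Y n.-1 (j' - q ^ n) - pi * Y n.-1 (j - q ^ n)) / pi = Y n.-1 (j' - q ^ n) - Y n.-1 (j - q ^ n) by field.
    by have -> : (n : int) - 1 = n.-1 by rewrite -(prednK n_gt0); lia.
  have := Y_uniq (idxS Hj' Hjq') (idxS Hj Hjq) Hx2.
  move: Hjq Hjq'; rewrite -!leqNgt; lia.
Qed.

Lemma B00inv b : B b -> b i0 i0 = (cj (b i1 i1))^-1.
Proof.
move=> Bb; have h := B_diag Bb; have [_ b11] := B_diag0 Bb.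
have h2 : cj (b i0 i0) = (b i1 i1)^-1 by apply: (mulIf b11); rewrite h mulVf.
by rewrite -cjV -h2 cjK.
Qed.

Section Chi.
Variable chi : E -> CC.
Hypothesis Hchi : is_char D chi.
Hypothesis chiT : forall a, pE n (a - 1) -> chi a = 1.

Lemma chiM x y : x != 0 -> y != 0 -> chi (x * y) = chi x * chi y.
Proof. by case: Hchi => H _; apply: H. Qed.

Lemma chi1 : chi 1 = 1.
Proof. by apply: chiT; rewrite subrr; exact: pE0. Qed.

Lemma chi_inv1 mu : pE n (mu - 1) -> chi ((cj mu)^-1) = 1.
Proof.
move=> h; apply: chiT.
have hw : pE n (cj mu - 1) by rewrite -cj1 -cjB; apply/pE_cj.
have w0 := pE_sub1 hw.
have w1 : ~ pE 1 (cj mu) by move=> h1; apply: (one_not h1); exact: pE_n1.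
have [wn0 wi] := pE_inv w0 w1.
have -> : (cj mu)^-1 - 1 = (cj mu)^-1 * (- (cj mu - 1)) by field.
by apply: pEM0 => //; apply/pEN.
Qed.

Lemma dec_uniq j j' b b' k k' : (j < NN)%N -> (j' < NN)%N -> B b -> B b' -> K n k -> K n k' ->
  b *m rep j *m k = b' *m rep j' *m k' -> j = j' /\ chi (b i0 i0) = chi (b' i0 i0).
Proof.
move=> Hj Hj' Bb Bb' Kk Kk' H.
have Hgk := G_invr (proj1 Kk').
have Kgk := K_ginv Kk'.
move: (ginv k') Hgk Kgk => gk Hgk Kgk.
have E1 : b *m (rep j *m (k *m gk)) = b' *m rep j'.
  by rewrite !mulmxA H -!mulmxA Hgk mulmx1.
have Kk2 := K_mul Kk Kgk.
have [b0 b1] := B_diag0 Bb; have [b0' b1'] := B_diag0 Bb'.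
set mu := b' i1 i1 / b i1 i1.
have Emu : b' i1 i1 = b i1 i1 * mu by rewrite /mu mulrC divfK.
have Hrow : forall t, (rep j *m (k *m gk)) i1 t = mu * rep j' i1 t.
  move=> t; have := congr1 (fun M : 'M[E]_2 => M i1 t) E1.
  rewrite (B_row _ _ Bb) (B_row _ _ Bb') Emu.
  by rewrite -mulrA => /(mulfI b1).
have [ej hmu] := bot_uniq Hj Hj' Kk2 (Hrow i0) (Hrow i1).
split=> //.
have mun0 : mu != 0 by rewrite /mu mulf_neq0 // invr_neq0.
rewrite (B00inv Bb') (B00inv Bb) Emu cjM invfM chiM; first by rewrite (chi_inv1 hmu) mulr1.
  by rewrite invr_neq0 // cj_eq0.
by rewrite invr_neq0 // cj_eq0.
Qed.

Definition dec j g b := B b /\ exists k, K n k /\ g = b *m rep j *m k.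

Definition phi (j : nat) (g : Mat D) : CC :=
  match excluded_middle_informative (exists b, dec j g b) with
  | left _ => chi ((epsilon (inhabits (1%:M : 'M[E]_2)) (dec j g)) i0 i0)
  | right _ => 0
  end.

Lemma phiE j g b : (j < NN)%N -> dec j g b -> phi j g = chi (b i0 i0).
Proof.
move=> Hj Hd; rewrite /phi; case: excluded_middle_informative => [H|H]; last first.
  by exfalso; apply: H; exists b.
have := epsilon_spec (inhabits (1%:M : 'M[E]_2)) (dec j g) H.
set b' := epsilon _ _ => -[Bb' [k' [Kk' E']]].
case: Hd => Bb [k [Kk E]].
have E2 : b *m rep j *m k = b' *m rep j *m k' by rewrite -E -E'.
by have [_ ->] := dec_uniq Hj Hj Bb Bb' Kk Kk' E2.
Qed.

Lemma phi0 j g : ~ (exists b, dec j g b) -> phi j g = 0.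
Proof. by move=> H; rewrite /phi; case: excluded_middle_informative. Qed.

Lemma dec_G j g b : dec j g b -> G g.
Proof.
case=> Bb [k [Kk ->]]; apply: G_mul; last exact: (proj1 Kk).
apply: G_mul; [exact: (proj1 Bb)|exact: rep_G].
Qed.

Lemma phi_V j : (j < NN)%N -> Vfix D chi n (phi j).
Proof.
move=> Hj.
have P4 : forall g k0, G g -> K n k0 -> phi j (g *m k0) = phi j g.
  move=> g k0 Gg Kk0.
  case: (excluded_middle_informative (exists b, dec j g b)) => [[b [Bb [k [Kk E]]]]|Hn].
    rewrite (@phiE j g b) //; last by split => //; exists k.
    apply: (@phiE j _ b) => //; split => //; exists (k *m k0); split; first exact: K_mul.
    by rewrite E -mulmxA.
  rewrite (phi0 Hn); apply: phi0 => -[b [Bb [k [Kk E]]]]; apply: Hn; exists b.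
  have Hg := G_invr (proj1 Kk0); have Kg := K_ginv Kk0.
  move: (ginv k0) Hg Kg => gk Hg Kg.
  split=> //; exists (k *m gk); split; first exact: K_mul.
  have -> : g = g *m k0 *m gk by rewrite -mulmxA Hg mulmx1.
  by rewrite E !mulmxA.
split; last split; last split.
- move=> g nG; apply: phi0 => -[b Hd]; apply: nG; exact: (dec_G Hd).
- by move=> g Gg; exists n => k Kk; apply: P4.
- move=> b' g Bb' Gg.
  case: (excluded_middle_informative (exists b, dec j g b)) => [[b [Bb [k [Kk E]]]]|Hn].
    rewrite (@phiE j g b) //; last by split => //; exists k.
    rewrite (@phiE j _ (b' *m b)) //; last first.
      split; first exact: B_mul.
      by exists k; split => //; rewrite E !mulmxA.
    have [h1 _] := B_diag0 Bb; have [h2 _] := B_diag0 Bb'.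
    by rewrite B00 // chiM.
  rewrite (phi0 Hn) mulr0; apply: phi0 => -[b [Bb [k [Kk E]]]]; apply: Hn.
  have Hg := G_invl (proj1 Bb'); have Bg := B_ginv Bb'.
  move: (ginv b') Hg Bg => gb Hg Bg.
  exists (gb *m b); split; first exact: B_mul.
  exists k; split => //.
  have -> : g = gb *m (b' *m g) by rewrite mulmxA Hg mul1mx.
  by rewrite E !mulmxA.
- by move=> g k Gg Kk; apply: P4.
Qed.

Lemma phi_rep j i : (j < NN)%N -> (i < NN)%N -> phi j (rep i) = if j == i then 1 else 0.
Proof.
move=> Hj Hi; case: eqP => [<-|ne].
  rewrite (@phiE j _ 1%:M) //; first by rewrite one_m2 m2_00 chi1.
  split; first exact: B1.
  by exists 1%:M; split; [exact: K1|rewrite mul1mx mulmx1].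
apply: phi0 => -[b [Bb [k [Kk E]]]]; apply: ne.
have E2 : b *m rep j *m k = 1%:M *m rep i *m 1%:M by rewrite -E mul1mx mulmx1.
by have [] := dec_uniq Hj Hi Bb B1 Kk (K1 n) E2.
Qed.

Lemma phi_other j i g b k : (j < NN)%N -> (i < NN)%N -> B b -> K n k ->
  g = b *m rep j *m k -> i != j -> phi i g = 0.
Proof.
move=> Hj Hi Bb Kk E ne; apply: phi0 => -[b2 [Bb2 [k2 [Kk2 E2]]]].
have E3 : b2 *m rep i *m k2 = b *m rep j *m k by rewrite -E -E2.
have [eij _] := dec_uniq Hi Hj Bb2 Bb Kk2 Kk E3.
by rewrite eij eqxx in ne.
Qed.

Lemma main_dim : has_dim D (Vfix D chi n) NN.
Proof.
exists (fun i : 'I_NN => phi i); split; last split.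
- by move=> i; apply: phi_V.
- move=> c Hc i; have H := Hc (rep i).
  rewrite (bigD1 i) //= in H.
  have S0 : \sum_(j < NN | j != i) c j * phi j (rep i) = 0.
    apply: big1 => j nji; rewrite phi_rep //; case: eqP => [eji|_]; last by rewrite mulr0.
    by move/eqP: nji; case; apply: val_inj.
  by rewrite S0 addr0 phi_rep // eqxx mulr1 in H.
- move=> f [V1 [_ [V3 V4]]].
  exists (fun i : 'I_NN => f (rep i)) => g.
  case: (excluded_middle_informative (G g)) => Gg; last first.
    rewrite V1 // big1 // => i _ /=.
    rewrite phi0 ?mulr0 // => -[b Hd]; apply: Gg; exact: (dec_G Hd).
  have [j [Hj [b [k [Bb [Kk E]]]]]] := decomp Gg.
  rewrite (bigD1 (Ordinal Hj)) // big1 ?addr0; last first.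
    move=> i nij.
    have nij' : (i : nat) != j.
      by apply: contra nij => /eqP eij; apply/eqP; apply: val_inj.
    by rewrite (@phi_other j i g b k) ?mulr0.
  change (f g = f (rep j) * phi j g + 0); rewrite addr0.
  rewrite (@phiE j g b) //; last by split => //; exists k.
  have Gbr : G (b *m rep j) by apply: G_mul; [exact: (proj1 Bb)|exact: rep_G].
  rewrite E (V4 (b *m rep j) k Gbr Kk) (V3 b (rep j) Bb (rep_G j)).
  exact: mulrC.
Qed.

End Chi.

End Rep.

Lemma depth_part n chi : (0 < n)%N -> forall W, irr_subrep D (Vfix D chi n) W ->
  exists d, rep_depth D W d /\ (d < n)%N.
Proof.
move=> n0 W [[sub _] _].
have At : acts_trivially D W n.
  move=> f k g Wf Kk; have [V1 [_ [_ V4]]] := sub f Wf.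
  case: (excluded_middle_informative (G g)) => Gg; first exact: V4.
  rewrite !V1 // => Ggk; apply: Gg.
  have Hk := G_invr (proj1 Kk); have Gk := G_ginv (proj1 Kk).
  move: (ginv k) Hk Gk => gk Hk Gk.
  have -> : g = g *m k *m gk by rewrite -mulmxA Hk mulmx1.
  exact: G_mul.
pose Pb d := if excluded_middle_informative (acts_trivially D W d.+1) then true else false.
have PbP : forall d, Pb d = true <-> acts_trivially D W d.+1.
  by move=> d; rewrite /Pb; case: excluded_middle_informative.
have ex : exists d, Pb d by exists n.-1; apply/PbP; rewrite prednK.
case: (ex_minnP ex) => d Pd Hmin; exists d; split; last first.
  have := Hmin n.-1; rewrite (proj2 (PbP _)); last by rewrite prednK.
  by move=> H; rewrite (leq_ltn_trans (H erefl)) // prednK.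
split; first exact/PbP.
move=> d' ltd H; have := Hmin d' (proj2 (PbP d') H).
by rewrite leqNgt ltd.
Qed.

Lemma chiT_of chi r n : char_depth D chi r -> (r.+1 <= n)%N ->
  forall a, pE n (a - 1) -> chi a = 1.
Proof.
move=> [[_ Ht]|[-> Ht]] Hn a Ha.
  by apply: Ht; rewrite /inT /=; exact: pE_le Hn Ha.
apply: Ht; rewrite /inT /=.
have Ha1 : pE 1 (a - 1) by exact: pE_le Hn Ha.
split.
  have -> : a = (a - 1) + 1 by ring.
  by apply: pED; [exact: (pE_le (leq0n 1) Ha1)|exact: pE01].
move=> h1; apply: pE1n; have -> : (1 : E) = a - (a - 1) by ring.
exact: pEB.
Qed.

End Main.

Theorem lemma4p3 (D : U11data) (HD : U11_ax D) (chi : uE D -> CC)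
  (Hchi : is_char D chi) (r : nat) (Hr : char_depth D chi r) (n : nat)
  (Hn : (r.+1 <= n)%N) :
  (forall W, irr_subrep D (Vfix D chi n) W ->
     exists d, rep_depth D W d /\ (d < n)%N) /\
  has_dim D (Vfix D chi n) (uq D ^ n.-1 * (uq D).+1)%N.
Proof.
have n0 : (0 < n)%N by apply: leq_trans Hn.
split; first exact: (depth_part HD n0).
exact: (main_dim HD n0 Hchi (chiT_of HD Hr Hn)).
Qed.
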